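(* For every integer $a\ge1$ and every $x\in\mathbb R$, \[ \int_{-1/2}^{1/2}\log|x^a-y^a|\,dy\ \ge\ -a(2\log2+1). \] *)

(* Defs.v *)
From mathcomp Require Import all_boot all_order all_algebra.
From mathcomp Require Import all_classical all_reals all_analysis.

(* Main.v *)
Require Import Defs.
From mathcomp Require Import all_boot all_order all_algebra.
From mathcomp Require Import all_classical all_reals all_analysis.
From mathcomp Require Import measurable_realfun.
From mathcomp Require Import ring lra.
Import Order.TTheory GRing.Theory Num.Theory.
Local Open Scope classical_set_scope.
Local Open Scope ring_scope.

Section S.
Variable R : realType.
Notation mu := (@lebesgue_measure R).
Lemma superadd (p q : R) n : 0 <= p -> 0 <= q -> p ^+ n.+1 + q ^+ n.+1 <= (p + q) ^+ n.+1.
Proof.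
move=> p0 q0; elim: n => [|n IH]; first by rewrite !expr1.
rewrite [(p+q)^+n.+2]exprS.
apply: (le_trans _ (ler_wpM2l _ IH)); last exact: addr_ge0.
rewrite mulrDl !mulrDr -!exprS.
have h1 : 0 <= p * q ^+ n.+1 by rewrite mulr_ge0 ?exprn_ge0.
have h2 : 0 <= q * p ^+ n.+1 by rewrite mulr_ge0 ?exprn_ge0.
lra.
Qed.

Lemma key_ineq (x y : R) n : `| `|x| - `|y| | ^+ n.+1 <= `| x ^+ n.+1 - y ^+ n.+1 |.
Proof.
apply: (le_trans _ (ler_dist_dist _ _)).
rewrite !normrX.
wlog : x y / `|y| <= `|x|.
  move=> H; have [h|h] := leP `|y| `|x|; first exact: H.
  rewrite distrC (distrC (`|x| ^+ n.+1)); apply: H; exact: ltW.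
move=> yx.
have d0 : 0 <= `|x| - `|y| by rewrite subr_ge0.
rewrite (ger0_norm d0) [X in _ <= X]ger0_norm; last first.
  by rewrite subr_ge0 lerXn2r // nnegrE.
have := @superadd _ _ n d0 (normr_ge0 y); rewrite subrK; lra.
Qed.


Lemma pw (a : nat) (x y d : R) : (0 < a)%N -> 0 < `|d| -> `|d| <= 1 ->
  `|d| <= `| `|x| - `|y| | ->
  Num.max (- ln `|x ^+ a - y ^+ a|) 0 <= a%:R * (- ln `|d|).
Proof.
case: a => // a _ d0 d1 dxy.
have lnd : ln `|d| <= 0 by apply: ln_le0.
have h0 : 0 <= a.+1%:R * (- ln `|d|) by rewrite mulr_ge0 // oppr_ge0.
rewrite ge_max h0 andbT.
have hd : `|d| ^+ a.+1 <= `|x ^+ a.+1 - y ^+ a.+1|.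
  apply: le_trans (key_ineq x y a); apply: lerXn2r => //; rewrite nnegrE //.
have pd : 0 < `|d| ^+ a.+1 by rewrite exprn_gt0.
have := hd; rewrite -ler_ln ?posrE //; last exact: lt_le_trans hd.
rewrite lnXn // => h; rewrite mulrN mulrC lerN2 mulr_natr //.
Qed.

Lemma entropy (p q : R) : 0 <= p -> 0 <= q -> p + q = 2^-1 ->
  (p - p * ln p) + (q - q * ln q) <= ln 2 + 2^-1.
Proof.
have key (t : R) : 0 <= t -> t - 4^-1 <= t * ln 4 + t * ln t.
  rewrite le_eqVlt => /predU1P[<-|t0]; first by rewrite !mul0r; lra.
  have t4 : 0 < 4 * t by rewrite mulr_gt0.
  have h : ln (1 + ((4 * t)^-1 - 1)) <= (4 * t)^-1 - 1.
    by apply: le_ln1Dx; rewrite ltrBrDr addNr invr_gt0.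
  rewrite [1 + _]addrC subrK lnV ?posrE // in h.
  rewrite -mulrDr -lnM ?posrE //.
  have : t * (1 - (4 * t)^-1) <= t * ln (4 * t).
    apply: ler_wpM2l; [exact: ltW | lra].
  by rewrite mulrBr mulr1 invfM mulrCA mulfV ?gt_eqF // mulr1.
have l4 : ln (4 : R) = 2 * ln 2.
  have -> : (4 : R) = 2 ^+ 2 by rewrite expr2; lra.
  by rewrite lnXn // mulr_natl.
move=> p0 q0 pq; have := key p p0; have := key q q0; rewrite l4.
have -> : q = 2^-1 - p by rewrite -pq addrC addKr.
lra.
Qed.



Lemma is_derive_lnR (c y : R) : c < y ->
  is_derive y 1 (fun z => ln (z - c)) (y - c)^-1.
Proof.
move=> cy.
have h1 : is_derive y 1 (fun z : R => z - c) 1.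
  have h := is_deriveB (is_derive_id y (1:R)) (is_derive_cst c y (1:R)).
  rewrite subr0 in h; exact: h.
have h2 : is_derive (y - c) 1 (@ln R) (y - c)^-1.
  by apply: is_derive1_ln; rewrite subr_gt0.
have h3 := @is_derive1_comp R (@ln R) _ y _ _ h2 h1.
rewrite mulr1 in h3; exact h3.
Qed.

Lemma is_derive_lnL (c y : R) : y < c ->
  is_derive y 1 (fun z => ln (c - z)) (- (c - y)^-1).
Proof.
move=> cy.
have h1 : is_derive y 1 (fun z : R => c - z) (-1).
  have h := is_deriveB (is_derive_cst c y (1:R)) (is_derive_id y (1:R)).
  rewrite sub0r in h; exact: h.
have h2 : is_derive (c - y) 1 (@ln R) (c - y)^-1.
  by apply: is_derive1_ln; rewrite subr_gt0.
have h3 := @is_derive1_comp R (@ln R) _ y _ _ h2 h1.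
rewrite mulrN1 in h3; exact h3.
Qed.

Lemma FTC_R (c e s : R) : 0 < e -> e < s ->
  (\int[mu]_(y in `[(c + e)%R, (c + s)%R]) (- ln (y - c))%:E =
   ((s - s * ln s) - (e - e * ln e))%:E)%E.
Proof.
move=> e0 es.
pose F := fun z : R => (z - c) - (z - c) * ln (z - c).
have dF : forall y, c < y -> is_derive y 1 F (- ln (y - c)).
  move=> y cy.
  have hid : is_derive y 1 (fun z : R => z - c) 1.
    have h := is_deriveB (is_derive_id y (1:R)) (is_derive_cst c y (1:R)).
    rewrite subr0 in h; exact: h.
  have h := is_deriveB hid (is_deriveM hid (@is_derive_lnR c y cy)).
  rewrite [X in is_derive _ _ _ X](_ : _ = - ln (y - c)) in h; first exact h.
  have sc : forall k z : R, k *: z = k * z by [].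
  rewrite !sc mulr1 mulfV; last by rewrite subr_eq0 gt_eqF.
  by rewrite opprD addrA subrr sub0r.
have cf : forall y, c < y -> {for y, continuous (fun z => - ln (z - c))}.
  move=> y cy; apply: differentiable_continuous; apply/derivable1_diffP.
  have := is_deriveN (@is_derive_lnR c y cy).
  by case.
have cF : forall y, c < y -> derivable F y 1.
  by move=> y cy; case: (dF y cy).
have ce : c < c + e by rewrite ltrDl.
rewrite (@continuous_FTC2 _ _ F).
- by rewrite /F !(addrC c) !addrK -EFinB.
- by rewrite ltrD2l.
- have H : {within `[c + e, c + s], continuous (fun z => - ln (z - c))}.
    apply/continuous_in_subspaceT => y; rewrite inE /= in_itv /= => /andP[y1 y2].
    apply: cf; exact: lt_le_trans y1.
  exact H.
- split.
  + move=> y; rewrite in_itv /= => /andP[y1 y2].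
    by case: (dF y (lt_trans ce y1)).
  + by apply: cvg_at_right_filter; apply: differentiable_continuous; apply/derivable1_diffP; apply: cF.
  + apply: cvg_at_left_filter; apply: differentiable_continuous; apply/derivable1_diffP; apply: cF.
    by rewrite ltrDl (lt_trans e0 es).
- move=> z; rewrite in_itv /= => /andP[y1 y2].
  rewrite derive1E; have [_ ->] := dF z (lt_trans ce y1); done.
Qed.


Lemma FTC_L (c e s : R) : 0 < e -> e < s ->
  (\int[mu]_(y in `[(c - s)%R, (c - e)%R]) (- ln (c - y))%:E =
   ((s - s * ln s) - (e - e * ln e))%:E)%E.
Proof.
move=> e0 es.
pose F := fun z : R => (c - z) * ln (c - z) - (c - z).
have dF : forall y, y < c -> is_derive y 1 F (- ln (c - y)).
  move=> y cy.
  have hid : is_derive y 1 (fun z : R => c - z) (-1).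
    have h := is_deriveB (is_derive_cst c y (1:R)) (is_derive_id y (1:R)).
    rewrite sub0r in h; exact: h.
  have h := is_deriveB (is_deriveM hid (@is_derive_lnL c y cy)) hid.
  rewrite [X in is_derive _ _ _ X](_ : _ = - ln (c - y)) in h; first exact h.
  have sc : forall k z : R, k *: z = k * z by [].
  rewrite !sc mulrN mulfV; last by rewrite subr_eq0 gt_eqF.
  by rewrite mulrN1 opprK; ring.
have cf : forall y, y < c -> {for y, continuous (fun z => - ln (c - z))}.
  move=> y cy; apply: differentiable_continuous; apply/derivable1_diffP.
  have := is_deriveN (@is_derive_lnL c y cy).
  by case.
have cF : forall y, y < c -> derivable F y 1.
  by move=> y cy; case: (dF y cy).
have ce : c - e < c by rewrite ltrBlDr ltrDl.
have cs : c - s < c - e by rewrite ltrD2l ltrN2.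
rewrite (@continuous_FTC2 _ _ F).
- rewrite /F !opprB !addrA !(addrC c) !addrK -EFinB; congr (_%:E); ring.
- exact: cs.
- have H : {within `[c - s, c - e], continuous (fun z => - ln (c - z))}.
    apply/continuous_in_subspaceT => y; rewrite inE /= in_itv /= => /andP[y1 y2].
    apply: cf; exact: le_lt_trans y2 ce.
  exact H.
- split.
  + move=> y; rewrite in_itv /= => /andP[y1 y2].
    by case: (dF y (lt_trans y2 ce)).
  + apply: cvg_at_right_filter; apply: differentiable_continuous; apply/derivable1_diffP; apply: cF.
    exact: lt_trans cs ce.
  + by apply: cvg_at_left_filter; apply: differentiable_continuous; apply/derivable1_diffP; apply: cF.
- move=> z; rewrite in_itv /= => /andP[y1 y2].
  rewrite derive1E; have [_ ->] := dF z (lt_trans y2 ce); done.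
Qed.


Lemma G_ge0 (e : R) : 0 <= e -> e <= 1 -> 0 <= e - e * ln e.
Proof.
move=> e0 e1; have := ln_le0 e1 => h.
have : e * ln e <= 0 by rewrite mulr_ge0_le0.
lra.
Qed.

Lemma coreR (c s : R) : 0 <= s -> s <= 1 ->
  (\int[mu]_(y in `[c, (c + s)%R]) (- ln (y - c))%:E <= (s - s * ln s)%:E)%E.
Proof.
move=> s0 s1.
have [->|sp] := eqVneq s 0.
  rewrite (@integral_Sset1 _ _ _ c); first by rewrite mul0r subrr.
  move=> y /=; rewrite in_itv /= addr0 => /andP[h1 h2].
  by apply/eqP; rewrite eq_le h1 h2.
have spos : 0 < s by rewrite lt_neqAle eq_sym sp s0.
have mf : measurable_fun [set: R] (fun y : R => (- ln (y - c))%:E).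
  apply/measurable_EFinP; apply: measurable_funN.
  apply: measurableT_comp; first exact: measurable_ln.
  exact: measurable_funB.
have f0 : forall y, y \in `[c, (c + s)%R] -> 0 <= - ln (y - c).
  move=> y; rewrite in_itv /= => /andP[h1 h2].
  rewrite oppr_ge0; apply: ln_le0.
  rewrite lerBlDl; apply: (le_trans h2); rewrite lerD2l //.
pose Fn := fun n : nat => `[(c + s / n.+2%:R)%R, (c + s)%R]%classic.
have sub : `]c, (c + s)%R] `<=` \bigcup_n Fn n.
  move=> y /=; rewrite in_itv /= => /andP[h1 h2].
  have yc : 0 < y - c by rewrite subr_gt0.
  exists (Num.Def.trunc (s / (y - c))) => //=.
  rewrite /Fn /= in_itv /= h2 andbT -lerBrDl.
  rewrite ler_pdivrMr; last by rewrite ltr0n.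
  rewrite -ler_pdivrMl // mulrC.
  apply: ltW; apply: (lt_le_trans (truncnS_gt _)).
  by rewrite ler_nat.
rewrite -integral_itv_obnd_cbnd; last exact: measurable_funTS.
have Fn0 : forall y, (\bigcup_n Fn n) y -> (0 <= (- ln (y - c))%:E)%E.
  move=> y [n _]; rewrite /Fn /= => hy; rewrite lee_fin; apply: f0.
  move: hy; rewrite !in_itv /= => /andP[h1 h2]; rewrite h2 andbT.
  apply: le_trans h1; rewrite lerDl divr_ge0 //.
have mU : measurable (\bigcup_n Fn n) by apply: bigcup_measurable => n _; exact: measurable_itv.
have H := @ge0_subset_integral _ _ _ mu _ _ (measurable_itv _) mU
  (fun y => (- ln (y - c))%:E) (measurable_funTS mf) Fn0 sub.
apply: (le_trans H).
have hom : {homo Fn : n m / (n <= m)%N >-> (n <= m)%O}.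
  move=> n m nm; rewrite subsetEset => y; rewrite /Fn /= !in_itv /= => /andP[h1 h2].
  rewrite h2 andbT; apply: le_trans h1; rewrite lerD2l ler_pdivrMr ?ltr0n //.
  rewrite mulrAC ler_pdivlMr ?ltr0n // ler_wpM2l // ler_nat.
  by rewrite ltnS ltnS.
have cv : (\int[mu]_(y in Fn i) (- ln (y - c))%:E)%E @[i --> \oo] -->
    (\int[mu]_(y in \bigcup_n Fn n) (- ln (y - c))%:E)%E.
  apply: ge0_nondecreasing_set_cvg_integral => //.
  - by move=> n; exact: measurable_itv.
  - by move=> n; exact: measurable_funTS.
  - by move=> n y hy; apply: Fn0; exists n.
rewrite -(cvg_lim _ cv) //; apply: lime_le; first by apply/cvg_ex; eexists; exact: cv.
apply: nearW => n.
have e0 : 0 < s / n.+2%:R by rewrite divr_gt0 // ltr0n.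
have es : s / n.+2%:R < s.
  rewrite ltr_pdivrMr ?ltr0n // -{1}(mulr1 s) ltr_pM2l // ltr1n //.
rewrite /Fn FTC_R // lee_fin lerBlDr lerDl; apply: G_ge0; first exact: ltW.
by apply: le_trans s1; exact: ltW.
Qed.



Lemma coreL (c s : R) : 0 <= s -> s <= 1 ->
  (\int[mu]_(y in `[(c - s)%R, c]) (- ln (c - y))%:E <= (s - s * ln s)%:E)%E.
Proof.
move=> s0 s1.
have [->|sp] := eqVneq s 0.
  rewrite (@integral_Sset1 _ _ _ c); first by rewrite mul0r subrr.
  move=> y /=; rewrite in_itv /= subr0 => /andP[h1 h2].
  by apply/eqP; rewrite eq_le h1 h2.
have spos : 0 < s by rewrite lt_neqAle eq_sym sp s0.
have mf : measurable_fun [set: R] (fun y : R => (- ln (c - y))%:E).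
  apply/measurable_EFinP; apply: measurable_funN.
  apply: measurableT_comp; first exact: measurable_ln.
  exact: measurable_funB.
have f0 : forall y, y \in `[(c - s)%R, c] -> 0 <= - ln (c - y).
  move=> y; rewrite in_itv /= => /andP[h1 h2].
  rewrite oppr_ge0; apply: ln_le0.
  apply: le_trans s1; rewrite lerBlDr -lerBlDl //.
pose Fn := fun n : nat => `[(c - s)%R, (c - s / n.+2%:R)%R]%classic.
have sub : `[(c - s)%R, c[ `<=` \bigcup_n Fn n.
  move=> y /=; rewrite in_itv /= => /andP[h1 h2].
  have yc : 0 < c - y by rewrite subr_gt0.
  exists (Num.Def.trunc (s / (c - y))) => //=.
  rewrite /Fn /= in_itv /= h1 /= lerBrDl -lerBrDr.
  rewrite ler_pdivrMr; last by rewrite ltr0n.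
  rewrite -ler_pdivrMl // mulrC.
  apply: ltW; apply: (lt_le_trans (truncnS_gt _)).
  by rewrite ler_nat.
rewrite -integral_itv_bndo_bndc; last exact: measurable_funTS.
have Fn0 : forall y, (\bigcup_n Fn n) y -> (0 <= (- ln (c - y))%:E)%E.
  move=> y [n _]; rewrite /Fn /= => hy; rewrite lee_fin; apply: f0.
  move: hy; rewrite !in_itv /= => /andP[h1 h2]; rewrite h1 /=.
  apply: (le_trans h2); rewrite gerBl divr_ge0 //.
have mU : measurable (\bigcup_n Fn n) by apply: bigcup_measurable => n _; exact: measurable_itv.
have H := @ge0_subset_integral _ _ _ mu _ _ (measurable_itv _) mU
  (fun y => (- ln (c - y))%:E) (measurable_funTS mf) Fn0 sub.
apply: (le_trans H).
have hom : {homo Fn : n m / (n <= m)%N >-> (n <= m)%O}.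
  move=> n m nm; rewrite subsetEset => y; rewrite /Fn /= !in_itv /= => /andP[h1 h2].
  rewrite h1 /=; apply: (le_trans h2); rewrite lerD2l lerN2 ler_pdivrMr ?ltr0n //.
  rewrite mulrAC ler_pdivlMr ?ltr0n // ler_wpM2l // ler_nat.
  by rewrite ltnS ltnS.
have cv : (\int[mu]_(y in Fn i) (- ln (c - y))%:E)%E @[i --> \oo] -->
    (\int[mu]_(y in \bigcup_n Fn n) (- ln (c - y))%:E)%E.
  apply: ge0_nondecreasing_set_cvg_integral => //.
  - by move=> n; exact: measurable_itv.
  - by move=> n; exact: measurable_funTS.
  - by move=> n y hy; apply: Fn0; exists n.
rewrite -(cvg_lim _ cv) //; apply: lime_le; first by apply/cvg_ex; eexists; exact: cv.
apply: nearW => n.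
have e0 : 0 < s / n.+2%:R by rewrite divr_gt0 // ltr0n.
have es : s / n.+2%:R < s.
  rewrite ltr_pdivrMr ?ltr0n // -{1}(mulr1 s) ltr_pM2l // ltr1n //.
rewrite /Fn FTC_L // lee_fin lerBlDr lerDl; apply: G_ge0; first exact: ltW.
by apply: le_trans s1; exact: ltW.
Qed.


Lemma nb (t m : R) : 0 <= t -> t <= 2^-1 -> 0 <= m -> m <= 2^-1 -> `|t - m| <= 1.
Proof. by move=> *; rewrite ler_norml; apply/andP; split; lra. Qed.

Lemma lemB (u c : R) : u <= c -> c <= u + 2^-1 ->
  (\int[mu]_(y in `[u, (u + 2^-1)%R]) (- ln `|y - c|)%:E <= (ln 2 + 2^-1)%:E)%E.
Proof.
move=> uc cu.
have mf : measurable_fun [set: R] (fun y : R => (- ln `|y - c|)%:E).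
  apply/measurable_EFinP; apply: measurable_funN.
  apply: measurableT_comp; first exact: measurable_ln.
  apply: measurableT_comp; first exact: normr_measurable.
  exact: measurable_funB.
have Hs : `[u, (u + 2^-1)%R]%classic = `[u, c]%classic `|` `]c, (u + 2^-1)%R]%classic.
  by apply: itv_bndbnd_setU; rewrite bnd_simp.
have f0 : forall y, `[u, (u + 2^-1)%R]%classic y -> (0 <= (- ln `|y - c|)%:E)%E.
  move=> y; rewrite /= in_itv /= => /andP[h1 h2].
  rewrite lee_fin oppr_ge0; apply: ln_le0.
  have [yc|yc] := leP y c.
    rewrite distrC ger0_norm ?subr_ge0 //; lra.
  rewrite gtr0_norm ?subr_gt0 //; lra.
rewrite Hs ge0_integral_setU //; first last.
- by apply/disj_setPS => y [/=]; rewrite !in_itv /= => /andP[_ h1] /andP[h2 _]; lra.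
- by rewrite -Hs.
- by apply: measurable_funTS.
set p := c - u; set q := u + 2^-1 - c.
have p0 : 0 <= p by rewrite /p subr_ge0.
have q0 : 0 <= q by rewrite /q subr_ge0.
have pq : p + q = 2^-1 by rewrite /p /q; ring.
have h1 : (\int[mu]_(y in `[u, c]) (- ln `|y - c|)%:E <= (p - p * ln p)%:E)%E.
  have -> : u = c - p by rewrite /p; ring.
  have -> : (\int[mu]_(y in `[(c - p)%R, c]) (- ln `|y - c|)%:E =
      \int[mu]_(y in `[(c - p)%R, c]) (- ln (c - y))%:E)%E.
    apply: eq_integral => y; rewrite inE /= in_itv /= => /andP[_ h].
    by rewrite distrC ger0_norm // subr_ge0.
  apply: coreL => //; lra.
have h2 : (\int[mu]_(y in `]c, (u + 2^-1)%R]) (- ln `|y - c|)%:E <= (q - q * ln q)%:E)%E.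
  rewrite integral_itv_obnd_cbnd; last exact: measurable_funTS.
  have -> : u + 2^-1 = c + q by rewrite /q; ring.
  have -> : (\int[mu]_(y in `[c, (c + q)%R]) (- ln `|y - c|)%:E =
      \int[mu]_(y in `[c, (c + q)%R]) (- ln (y - c))%:E)%E.
    apply: eq_integral => y; rewrite inE /= in_itv /= => /andP[h _].
    by rewrite ger0_norm // subr_ge0.
  apply: coreR => //; lra.
apply: le_trans (leeD h1 h2) _.
by rewrite -EFinD lee_fin; apply: entropy.
Qed.

End S.

Arguments lemB {R}.
Arguments pw {R}.
Arguments nb {R}.

Theorem mainTheorem6 (R : realType) (a : nat) (x : R) : (1 <= a)%N ->
  ((- (a%:R * (2 * ln (2 : R) + 1)))%:E <=
   \int[(@lebesgue_measure R)]_(y in `[(- 2^-1)%R, (2^-1)%R])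
      (ln `|x ^+ a - y ^+ a|%R)%:E)%E.
Proof.
move=> a1.
pose m : R := if `|x| <= 2^-1 then `|x| else 2^-1.
have m0 : 0 <= m by rewrite /m; case: ifP.
have m1 : m <= 2^-1 by rewrite /m; case: ifP.
have clamp : forall t : R, 0 <= t -> t <= 2^-1 -> `|t - m| <= `| `|x| - t|.
  move=> t t0 t1; rewrite /m; case: ifP => hx.
    by rewrite distrC.
  move/negbT: hx; rewrite -ltNge => hx.
  rewrite ler0_norm ?subr_le0 // ger0_norm; last first.
    rewrite subr_ge0; apply: le_trans t1 (ltW hx).
  lra.
clearbody m.
have mf : measurable_fun [set: R] (fun y : R => (ln `|x ^+ a - y ^+ a|)%:E).
  apply/measurable_EFinP.
  apply: measurableT_comp; first exact: measurable_ln.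
  apply: measurableT_comp; first exact: normr_measurable.
  apply: measurable_funB; first exact: measurable_cst.
  exact: measurable_funX.
have mg : measurable_fun [set: R] (fun y : R => (- ln `| `|y| - m|)%:E).
  apply/measurable_EFinP; apply: measurable_funN.
  apply: measurableT_comp; first exact: measurable_ln.
  apply: measurableT_comp; first exact: normr_measurable.
  apply: measurable_funB; first exact: normr_measurable.
  exact: measurable_cst.
have Iy : forall y : R, `[(- 2^-1)%R, (2^-1)%R]%classic y -> `|y| <= 2^-1.
  by move=> y; rewrite /= in_itv /= => /andP[h1 h2]; rewrite ler_norml h1 h2.
have g0 : forall y : R, `[(- 2^-1)%R, (2^-1)%R]%classic y -> 0 <= - ln `| `|y| - m|.
  move=> y /Iy hy; rewrite oppr_ge0; apply: ln_le0.
  apply: nb => //; exact: normr_ge0.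
have Ka : (0 : R) <= a%:R by [].
rewrite integralE.
have P0 : (0 <= \int[lebesgue_measure]_(y in `[(- 2^-1)%R, (2^-1)%R])
    ((fun y : R => (ln `|x ^+ a - y ^+ a|)%:E)^\+ y))%E.
  by apply: integral_ge0 => y _; exact: funepos_ge0.
have N1 : forall r : R, (@lebesgue_measure R).-negligible [set r].
  move=> r; exists [set r]; split => //.
  exact: lebesgue_measure_set1.
suff NK : (\int[lebesgue_measure]_(y in `[(- 2^-1)%R, (2^-1)%R])
    ((fun y : R => (ln `|x ^+ a - y ^+ a|)%:E)^\- y) <=
    (a%:R * (2 * ln 2 + 1))%:E)%E.
  by have := leeB P0 NK; rewrite sub0e EFinN.
apply: (@le_trans _ _ (\int[lebesgue_measure]_(y in `[(- 2^-1)%R, (2^-1)%R])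
    ((a%:R)%:E * (- ln `| `|y| - m|)%:E))%E).
  apply: ae_ge0_le_integral => //.
  - by apply: measurable_funeneg; exact: measurable_funTS.
  - by move=> y hy; rewrite -EFinM lee_fin mulr_ge0 // g0.
  - have -> : (fun y : R => ((a%:R)%:E * (- ln `| `|y| - m|)%:E)%E) =
        (fun y : R => (a%:R * (- ln `| `|y| - m|))%:E) by apply/funext => y.
    apply/measurable_EFinP; apply: measurable_funM; first exact: measurable_cst.
    by apply/measurable_EFinP; exact: measurable_funTS.
  apply: (negligibleS _ (negligibleU (N1 m) (N1 (- m)))).
  move=> y /= H.
  have [->|ym] := eqVneq y m; first by left.
  have [->|ym'] := eqVneq y (- m); first by right.
  exfalso; apply: H => hI.
  have d0 : 0 < `| `|y| - m |.
    rewrite normr_gt0 subr_eq0; apply/eqP => e; move: ym ym'.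
    have [y0|y0] := leP 0 y.
      by move: e; rewrite ger0_norm // => ->; rewrite eqxx.
    move: e; rewrite ltr0_norm // => e; rewrite -e opprK eqxx.
    by move=> _ /negP; apply.
  have d1 : `| `|y| - m | <= 1.
    by apply: nb; [exact: normr_ge0 | exact: Iy | exact: m0 | exact: m1].
  have d2 : `| `|y| - m | <= `| `|x| - `|y| |.
    apply: clamp; [exact: normr_ge0 | exact: Iy].
  have := pw a x y (`|y| - m) a1 d0 d1 d2.
  rewrite ge_max => /andP[k1 k2].
  rewrite funenegE ge_max -EFinN -EFinM !lee_fin k1 /=.
  exact: k2.
have gE0 : forall y : R, `[(- 2^-1)%R, (2^-1)%R]%classic y -> (0 <= (- ln `| `|y| - m|)%:E)%E.
  by move=> y hy; rewrite lee_fin; apply: g0.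
rewrite ge0_integralZl_EFin //; last exact: measurable_funTS.
rewrite EFinM; apply: lee_wpmul2l; first by rewrite lee_fin.
have HI : `[(- 2^-1)%R, (2^-1)%R]%classic =
    `[(- 2^-1)%R, 0%R[%classic `|` `[0%R, (2^-1)%R]%classic :> set R.
  by apply: itv_bndbnd_setU; rewrite bnd_simp // ?oppr_le0 // invr_ge0.
rewrite HI ge0_integral_setU //; first last.
- by apply/disj_setPS => y [/=]; rewrite !in_itv /= => /andP[_ h1] /andP[h2 _]; lra.
- by move=> y hy; rewrite lee_fin; apply: g0; rewrite HI.
- exact: measurable_funTS.
have h1 : (\int[lebesgue_measure]_(y in `[(- 2^-1)%R, 0%R[) (- ln `| `|y| - m|)%:E <=
    (ln 2 + 2^-1)%:E)%E.
  apply: (@le_trans _ _ (\int[lebesgue_measure]_(y in `[(- 2^-1)%R, 0%R]) (- ln `| `|y| - m|)%:E)%E).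
    apply: ge0_subset_integral => //.
    - exact: measurable_funTS.
    - move=> y; rewrite /= in_itv /= => /andP[h1 h2]; rewrite lee_fin; apply: g0.
      rewrite /= in_itv /= h1 /=; apply: le_trans h2 _; rewrite invr_ge0 //.
    - by move=> y; rewrite /= !in_itv /= => /andP[-> /ltW ->].
  have <- : (\int[lebesgue_measure]_(y in `[(- 2^-1)%R, (- 2^-1 + 2^-1)%R]) (- ln `|y - - m|)%:E =
      \int[lebesgue_measure]_(y in `[(- 2^-1)%R, 0%R]) (- ln `| `|y| - m|)%:E)%E.
    rewrite addNr; apply: eq_integral => y; rewrite inE /= in_itv /= => /andP[_ h].
    by rewrite (ler0_norm h) opprK -opprD normrN.
  apply: lemB; lra.
have h2 : (\int[lebesgue_measure]_(y in `[0%R, (2^-1)%R]) (- ln `| `|y| - m|)%:E <=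
    (ln 2 + 2^-1)%:E)%E.
  have <- : (\int[lebesgue_measure]_(y in `[0%R, (0 + 2^-1)%R]) (- ln `|y - m|)%:E =
      \int[lebesgue_measure]_(y in `[0%R, (2^-1)%R]) (- ln `| `|y| - m|)%:E)%E.
    rewrite add0r; apply: eq_integral => y; rewrite inE /= in_itv /= => /andP[h _].
    by rewrite (ger0_norm h).
  apply: lemB; lra.
apply: le_trans (leeD h1 h2) _.
by rewrite -EFinD lee_fin; lra.
Qed.
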